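(* Let $A=\Gamma_R(Rx)$ be the free $DP$ algebra on one generator $x$, so that $A$ is the free $R$-module on $\{\gamma_n(x):n\ge1\}$. Write $\gamma_n=\gamma_n(x)$, $\gamma_0=1\in A_+$, and $\phi_n=\phi_n(dx)\in\Omega^{CA}_{A/R}$, where $\Omega^{CA}_{A/R}$ carries the $U(A)$-module structure for which $d$ is a $DP$ derivation. Then for every $n\ge1$: $$d\gamma_n=\sum_{i=0}^{n-1}\gamma_i\,\phi_{n-i}\qquad\text{and}\qquad \phi_n=\sum_{i=0}^{n-1}(-1)^i\gamma_i\,d\gamma_{n-i},$$ and as an $A_+$-module $$\Omega^{CA}_{A/R}\cong A_+\cdot dx\ \oplus\ \bigoplus_{p\ \text{prime}}\ \bigoplus_{e\ge1}(A_+/pA_+)\cdot\phi_{p^e},$$ where $A_+\cdot dx$ is free on $dx=d\gamma_1$ and each summand $(A_+/pA_+)\cdot\phi_{p^e}$ is cyclic generated by $\phi_{p^e}$ and isomorphic to $A_+/pA_+$.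
   Context: Fix a commutative unital ring $R$. An ''algebra'' means a commutative, not necessarily unital, $R$-algebra. A $DP$ algebra is an algebra $A$ with maps $\gamma_n:A\to A$ ($n\ge1$) such that for all $a,b\in A$, $r\in R$, $m,n\ge1$: $\gamma_1(a)=a$; $\gamma_n(a+b)=\gamma_n(a)+\sum_{i+j=n,\,i,j\ge1}\gamma_i(a)\gamma_j(b)+\gamma_n(b)$; $\gamma_n(ab)=a^n\gamma_n(b)$; $\gamma_n(rb)=r^n\gamma_n(b)$; $\gamma_m(a)\gamma_n(a)=\frac{(m+n)!}{m!\,n!}\gamma_{m+n}(a)$; $\gamma_m(\gamma_n(a))=\frac{(mn)!}{m!(n!)^m}\gamma_{mn}(a)$. $\Gamma_R(Rx)$ is the free $DP$ algebra on the free rank-one $R$-module with basis $x$. $A_+=A\oplus R$ is the unital algebra with $(a,r)(b,s)=(ab+sa+rb,rs)$. $\Omega^{CA}_{A/R}=(A_+\otimes A)/(a\otimes b-1\otimes ab+b\otimes a)$ with $da=[1\otimes a]$. A left $U(A)$-module is an $A_+$-module $M$ with pairwise commuting additive operators $\phi_p$ ($p$ prime) satisfying $p\phi_p=0$, $\phi_p(rx)=r^p\phi_p(x)$ for $r\in R$, and $\phi_p(ax)=0$ for $a\in A$; set $\phi_1=\mathrm{id}$, $\phi_{p^e}=\phi_p^e$, $\phi_n=0$ for $n>1$ not a prime power. A $DP$ derivation $s:A\to M$ is an $R$-linear map with $s(ab)=as(b)+bs(a)$ and $s(\gamma_n a)=\phi_n(sa)+\sum_{i+j=n,\,i,j\ge1}\gamma_i(a)\phi_j(sa)$.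 There is a unique $U(A)$-module structure on $\Omega^{CA}_{A/R}$ extending its $A_+$-module structure for which $d$ is a $DP$ derivation; this is the structure used. *)

(* Defs.v *)
From HB Require Import structures.
From mathcomp Require Import all_boot all_algebra.
Set Implicit Arguments. Unset Strict Implicit. Unset Printing Implicit Defensive.
Import GRing.Theory.
Local Open Scope ring_scope.

Section DP.
Variable R : comPzRingType.

Definition is_ncalg (A : lmodType R) (mul : A -> A -> A) : Prop :=
  [/\ forall a b c, mul a (mul b c) = mul (mul a b) c,
      forall a b, mul a b = mul b a,
      forall a b c, mul (a + b) c = mul a c + mul b c &
      forall (r : R) a b, mul (r *: a) b = r *: mul a b].

Definition powA (A : Type) (mul : A -> A -> A) (a : A) (n : nat) : A :=
  iter n.-1 (mul a) a.

Definition dp_coef (m n : nat) : nat := (m * n)`! %/ (m`! * n`! ^ m).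

Definition is_DPalg (A : lmodType R) (mul : A -> A -> A) (gam : nat -> A -> A)
  : Prop :=
  is_ncalg mul /\ (forall a, gam 1%N a = a) /\
  [/\ 
      forall n a b, (0 < n)%N ->
        gam n (a + b) = gam n a + \sum_(1 <= i < n) mul (gam i a) (gam (n - i)%N b)
                        + gam n b,
      forall n a b, (0 < n)%N -> gam n (mul a b) = mul (powA mul a n) (gam n b),
      forall n (r : R) b, (0 < n)%N -> gam n (r *: b) = r ^+ n *: gam n b,
      forall m n a, (0 < m)%N -> (0 < n)%N ->
        mul (gam m a) (gam n a) = gam (m + n)%N a *+ 'C(m + n, m) &
      forall m n a, (0 < m)%N -> (0 < n)%N ->
        gam m (gam n a) = gam (m * n)%N a *+ dp_coef m n].

Definition gam_basis (A : lmodType R) (gam : nat -> A -> A) (x : A) : Prop :=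
  (forall a : A, exists (N : nat) (c : nat -> R),
      a = \sum_(1 <= n < N) c n *: gam n x) /\
  (forall (N : nat) (c : nat -> R),
      \sum_(1 <= n < N) c n *: gam n x = 0 ->
      forall n, (1 <= n < N)%N -> c n = 0).

(* A_+ = A (+) R, represented as pairs (a, r). *)
Definition Aplus (A : lmodType R) := (A * R)%type.

(* An A_+-module: an R-module M with an action of A (the element (a,r) of
   A_+ acts by m |-> act a m + r *: m). *)
Definition is_Aplus_mod (A : lmodType R) (mul : A -> A -> A)
  (M : lmodType R) (act : A -> M -> M) : Prop :=
  [/\ forall a b m, act (a + b) m = act a m + act b m,
      forall (r : R) a m, act (r *: a) m = r *: act a m,
      forall a m n, act a (m + n) = act a m + act a n,
      forall (r : R) a m, act a (r *: m) = r *: act a m &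
      forall a b m, act (mul a b) m = act a (act b m)].

Definition aact (A : lmodType R) (M : lmodType R) (act : A -> M -> M)
  (c : Aplus A) (m : M) : M := act c.1 m + c.2 *: m.

Definition aplus_natmul (A : lmodType R) (c : Aplus A) (p : nat) : Aplus A :=
  (c.1 *+ p, c.2 *+ p).

Definition is_Aplus_lin (A : lmodType R) (M N : lmodType R)
  (act : A -> M -> M) (actN : A -> N -> N) (f : M -> N) : Prop :=
  [/\ forall m n, f (m + n) = f m + f n,
      forall (r : R) m, f (r *: m) = r *: f m &
      forall a m, f (act a m) = actN a (f m)].

Definition is_der (A : lmodType R) (mul : A -> A -> A) (M : lmodType R)
  (act : A -> M -> M) (s : A -> M) : Prop :=
  [/\ forall a b, s (a + b) = s a + s b,
      forall (r : R) a, s (r *: a) = r *: s a &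
      forall a b, s (mul a b) = act a (s b) + act b (s a)].

(* (M, act, d) is Omega^{CA}_{A/R} = (A_+ (x) A)/(a(x)b - 1(x)ab + b(x)a),
   d a = [1 (x) a], characterized by the universal property of this
   presentation: A_+-linear maps out of it are the derivations out of A. *)
Definition is_OmegaCA (A : lmodType R) (mul : A -> A -> A)
  (M : lmodType R) (act : A -> M -> M) (d : A -> M) : Prop :=
  [/\ is_Aplus_mod mul act, is_der mul act d &
      forall (N : lmodType R) (actN : A -> N -> N) (s : A -> N),
        is_Aplus_mod mul actN -> is_der mul actN s ->
        (exists f : M -> N, is_Aplus_lin act actN f /\ forall a, f (d a) = s a) /\
        (forall f g : M -> N, is_Aplus_lin act actN f -> is_Aplus_lin act actN g ->
           (forall a, f (d a) = s a) -> (forall a, g (d a) = s a) -> f =1 g)].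

Definition is_UA_mod (A : lmodType R) (M : lmodType R) (act : A -> M -> M)
  (phi : nat -> M -> M) : Prop :=
  forall p, prime p ->
  [/\ forall m n, phi p (m + n) = phi p m + phi p n,
      forall m, phi p m *+ p = 0,
      forall (r : R) m, phi p (r *: m) = r ^+ p *: phi p m,
      forall a m, phi p (act a m) = 0 &
      forall q m, prime q -> phi p (phi q m) = phi q (phi p m)].

Definition phin (M : lmodType R) (phi : nat -> M -> M) (n : nat) (m : M) : M :=
  if n == 1%N then m else
  if primes n is [:: p] then iter (logn p n) (phi p) m else 0.

Definition is_DPder (A : lmodType R) (mul : A -> A -> A) (gam : nat -> A -> A)
  (M : lmodType R) (act : A -> M -> M) (phi : nat -> M -> M) (s : A -> M) : Prop :=
  [/\ forall a b, s (a + b) = s a + s b,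
      forall (r : R) a, s (r *: a) = r *: s a,
      forall a b, s (mul a b) = act a (s b) + act b (s a) &
      forall n a, (0 < n)%N ->
        s (gam n a) = phin phi n (s a)
                      + \sum_(1 <= i < n) act (gam i a) (phin phi (n - i)%N (s a))].

Definition gamP (A : lmodType R) (gam : nat -> A -> A) (x : A) (i : nat) : Aplus A :=
  if i is 0%N then (0, 1) else (gam i x, 0).

End DP.

(* Main.v *)
Require Import Defs.
From HB Require Import structures.
From mathcomp Require Import all_boot all_algebra zify.
From mathcomp Require Import boolp.
Set Implicit Arguments. Unset Strict Implicit. Unset Printing Implicit Defensive.
Import GRing.Theory.
Local Open Scope ring_scope.
Local Open Scope nat_scope.

Lemma bin_pe p e i : prime p -> 0 < i < p ^ e -> p %| 'C(p ^ e, i).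
Proof.
move=> pp /andP [i0 ilt].
apply/negPn/negP => nd.
have cop : coprime (p ^ e) 'C(p ^ e, i) by rewrite coprimeXl // prime_coprime.
have h : p ^ e %| i * 'C(p ^ e, i).
  case: i i0 ilt {nd cop} => // k _ _.
  by rewrite -mul_bin_diag dvdn_mulr.
rewrite Gauss_dvdl // in h.
by have := dvdn_leq i0 h; rewrite leqNgt ilt.
Qed.

Definition Xb n m i := if n <= i then 'C(m, i - n) else 0.

Lemma bin_cong p e m i : prime p ->
  'C(m + p ^ e, i) = 'C(m, i) + Xb (p ^ e) m i %[mod p].
Proof.
move=> pp; set n := p ^ e.
have n0 : 0 < n by rewrite expn_gt0 prime_gt0.
elim: m i => [|m IH] i.
  rewrite add0n bin0n /Xb.
  case: (ltngtP i n) => [lt|gt|->].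
  - case: i lt => [|i] lt; first by rewrite bin0.
    rewrite addn0 /=; apply/eqP; rewrite eqn_mod_dvd ?leq0n // subn0; exact: bin_pe.
  - rewrite bin_small // bin0n; have := gt; rewrite -subn_gt0.
    case: (i - n) => // k _; case: i gt => //.
  - by rewrite subnn binn bin0 (negbTE (lt0n_neq0 n0)).
case: i => [|i]; first by rewrite !bin0 /Xb leqNgt n0.
rewrite addSn !binS.
have e1 := IH i.+1; have e2 := IH i.
have -> : Xb n m.+1 i.+1 = Xb n m i.+1 + Xb n m i.
  rewrite /Xb; case: (leqP n i) => h2.
    by rewrite (leqW h2) subSn // binS.
  case: (leqP n i.+1) => h3 //.
  have -> : n = i.+1 by apply/eqP; rewrite eqn_leq h3.
  by rewrite subnn !bin0.
rewrite addnACA; rewrite -modnDm e1 e2 modnDm.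
by rewrite addnACA.
Qed.

Lemma bin_cong2 p e m i j : prime p -> i + j = m + p ^ e -> 0 < j ->
  'C(i + j, i) = 'C(m, i) + 'C(m, j) %[mod p].
Proof.
move=> pp eij j0; rewrite eij bin_cong //; congr (_ %% p); congr (_ + _).
rewrite /Xb; case: ifP => h.
  have -> : j = m - (i - p ^ e) by lia.
  by rewrite bin_sub //; lia.
by rewrite bin_small //; lia.
Qed.

Lemma bin_pascal2 m i j : i + j = m.+1 -> 0 < i -> 0 < j ->
  'C(i + j, i) = 'C(m, i) + 'C(m, j).
Proof.
case: i => // i; rewrite addSn => [[eij]] _ j0.
rewrite eij binS; congr (_ + _).
have -> : j = m - i by rewrite -eij addKn.
by rewrite bin_sub // -eij leq_addr.
Qed.
Local Open Scope ring_scope.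

Section ModLemmas.
Variables (R : comPzRingType) (A : lmodType R) (mul : A -> A -> A).
Variables (N : lmodType R) (act : A -> N -> N).
Hypothesis hN : is_Aplus_mod mul act.

Lemma actDl a b m : act (a + b) m = act a m + act b m.
Proof. by case: hN. Qed.
Lemma actZl r a m : act (r *: a) m = r *: act a m.
Proof. by case: hN. Qed.
Lemma actDr a m n : act a (m + n) = act a m + act a n.
Proof. by case: hN. Qed.
Lemma actZr r a m : act a (r *: m) = r *: act a m.
Proof. by case: hN. Qed.
Lemma actM a b m : act (mul a b) m = act a (act b m).
Proof. by case: hN. Qed.
Lemma act0l m : act 0 m = 0.
Proof. by rewrite -(scale0r (0 : A)) actZl scale0r. Qed.
Lemma act0r a : act a 0 = 0.
Proof. by have := actZr 0 a 0; rewrite !scale0r. Qed.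
Lemma actNr a m : act a (- m) = - act a m.
Proof. by rewrite -scaleN1r actZr scaleN1r. Qed.
Lemma actMnl a m k : act (a *+ k) m = act a m *+ k.
Proof. by elim: k => [|k IH]; rewrite ?act0l // !mulrS actDl IH. Qed.
Lemma actMnr a m k : act a (m *+ k) = act a m *+ k.
Proof. by elim: k => [|k IH]; rewrite ?act0r // !mulrS actDr IH. Qed.
Lemma act_sumr a I (r : seq I) (P : pred I) (F : I -> N) :
  act a (\sum_(i <- r | P i) F i) = \sum_(i <- r | P i) act a (F i).
Proof. exact: (big_morph (act a) (actDr a) (act0r a)). Qed.
Lemma act_suml m I (r : seq I) (P : pred I) (F : I -> A) :
  act (\sum_(i <- r | P i) F i) m = \sum_(i <- r | P i) act (F i) m.
Proof. exact: (big_morph (act^~ m) (fun a b => actDl a b m) (act0l m)). Qed.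

Lemma aact1 m : aact act (0, 1) m = m.
Proof. by rewrite /aact /= act0l add0r scale1r. Qed.
Lemma aactDr c m n : aact act c (m + n) = aact act c m + aact act c n.
Proof. by rewrite /aact actDr scalerDr addrACA. Qed.
Lemma aactZr c r m : aact act c (r *: m) = r *: aact act c m.
Proof. by rewrite /aact actZr scalerDr !scalerA mulrC. Qed.
Lemma aact0r c : aact act c 0 = 0.
Proof. by rewrite /aact act0r scaler0 addr0. Qed.
Lemma aactMnr c m k : aact act c (m *+ k) = aact act c m *+ k.
Proof. by elim: k => [|k IH]; rewrite ?aact0r // !mulrS aactDr IH. Qed.
Lemma aact_sumr c I (r : seq I) (P : pred I) (F : I -> N) :
  aact act c (\sum_(i <- r | P i) F i) = \sum_(i <- r | P i) aact act c (F i).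
Proof. exact: (big_morph (aact act c) (aactDr c) (aact0r c)). Qed.
End ModLemmas.

Lemma triangle (V : nmodType) n (F : nat -> nat -> V) :
  \sum_(0 <= i < n) \sum_(0 <= k < n - i) F i (i + k)%N =
  \sum_(0 <= m < n) \sum_(0 <= i < m.+1) F i m.
Proof.
elim: n => [|n IH]; first by rewrite !big_geq.
rewrite big_nat_recr //= [in RHS]big_nat_recr //= -IH.
have -> : (n.+1 - n = 1)%N by lia.
rewrite big_nat1 addn0.
have -> : \sum_(0 <= i < n) \sum_(0 <= k < n.+1 - i) F i (i + k)%N =
  \sum_(0 <= i < n) (\sum_(0 <= k < n - i) F i (i + k)%N + F i n).
  apply: eq_big_nat => i /andP [_ lin].
  have -> : (n.+1 - i = (n - i).+1)%N by lia.
  rewrite big_nat_recr //=; congr (_ + _); congr F; lia.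
rewrite big_split /= [in RHS]big_nat_recr //=.
by rewrite addrA.
Qed.

Lemma alt_bin (K : comPzRingType) m :
  \sum_(0 <= i < m.+1) ((-1) ^+ i *+ 'C(m, i) : K) = (m == 0%N)%:R.
Proof.
rewrite big_mkord.
have := exprDn (1 : K) (-1) m; rewrite subrr expr0n => ->.
by apply: eq_bigr => i _; rewrite expr1n mul1r.
Qed.

Section Quot.
Variable R : comPzRingType.

Record subm (V : lmodType R) := Subm {
  sP : V -> Prop;
  sP0 : sP 0;
  sPD : forall u v, sP u -> sP v -> sP (u + v);
  sPZ : forall (r : R) u, sP u -> sP (r *: u) }.

Definition qT (V : lmodType R) (S : subm V) :=
  {C : V -> Prop | exists v, C = fun w => sP S (w - v)}.

HB.instance Definition _ V S := gen_eqMixin (@qT V S).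
HB.instance Definition _ V S := gen_choiceMixin (@qT V S).

Section Ops.
Variables (V : lmodType R) (S : subm V).
Let P := sP S.
Definition qpi (v : V) : qT S := exist _ (fun w => P (w - v)) (ex_intro _ v erefl).
Definition qrep (q : qT S) : V := projT1 (cid (proj2_sig q)).
Lemma qrepK q : qpi (qrep q) = q.
Proof.
rewrite /qrep; case: (cid _) => v /= hv.
case: q hv => C hC /= hv; subst C.
rewrite /qpi; congr exist; exact: Prop_irrelevance.
Qed.
Lemma PN u : P u -> P (- u).
Proof. by move=> h; rewrite -scaleN1r; apply: sPZ. Qed.
Lemma PB u v : P u -> P v -> P (u - v).
Proof. by move=> hu hv; apply: sPD => //; apply: PN. Qed.
Lemma qpiP v w : qpi v = qpi w <-> P (v - w).
Proof.
split.
  move=> /(congr1 (@proj1_sig _ _)) /= /(congr1 (fun f => f v)).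
  by rewrite subrr => <-; apply: sP0.
move=> h; rewrite /qpi; apply: eq_exist_uncurried.
have e : (fun w0 => P (w0 - v)) = (fun w0 => P (w0 - w)).
  apply: funext => u; apply: propext; split => hu.
    by have := sPD hu h; rewrite addrA subrK.
  by have := PB hu h; rewrite opprB addrA subrK.
by exists e; exact: Prop_irrelevance.
Qed.
Lemma qpi_surj q : exists v, q = qpi v.
Proof. by exists (qrep q); rewrite qrepK. Qed.

Definition qadd (a b : qT S) := qpi (qrep a + qrep b).
Definition qopp (a : qT S) := qpi (- qrep a).
Definition qzero := qpi 0.
Definition qscale (r : R) (a : qT S) := qpi (r *: qrep a).

Lemma qaddE u v : qadd (qpi u) (qpi v) = qpi (u + v).
Proof.
apply/qpiP; have /qpiP h1 := qrepK (qpi u); have /qpiP h2 := qrepK (qpi v).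
have := sPD h1 h2.
by congr P; rewrite opprD !addrA; congr (_ + _); rewrite addrAC -!addrA; congr (_ + _); rewrite addrC.
Qed.
Lemma qoppE u : qopp (qpi u) = qpi (- u).
Proof.
apply/qpiP; have /qpiP h1 := qrepK (qpi u).
by have := PN h1; congr P; rewrite opprB opprK addrC.
Qed.
Lemma qscaleE r u : qscale r (qpi u) = qpi (r *: u).
Proof.
apply/qpiP; have /qpiP h1 := qrepK (qpi u).
by have := sPZ r h1; congr P; rewrite scalerBr.
Qed.

Lemma qaddA : associative qadd.
Proof.
move=> a b c; case: (qpi_surj a) => u ->; case: (qpi_surj b) => v ->;
case: (qpi_surj c) => w ->; by rewrite !qaddE addrA.
Qed.
Lemma qaddC : commutative qadd.
Proof.
move=> a b; case: (qpi_surj a) => u ->; case: (qpi_surj b) => v ->;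
by rewrite !qaddE addrC.
Qed.
Lemma qadd0 : left_id qzero qadd.
Proof. move=> a; case: (qpi_surj a) => u ->; by rewrite qaddE add0r. Qed.
Lemma qaddN : left_inverse qzero qopp qadd.
Proof. move=> a; case: (qpi_surj a) => u ->; by rewrite qoppE qaddE addNr. Qed.

HB.instance Definition _ := GRing.isZmodule.Build (qT S) qaddA qaddC qadd0 qaddN.
Lemma qpiD u v : qpi (u + v) = qpi u + qpi v.
Proof. exact: (esym (qaddE u v)). Qed.

Lemma qscaleA a b v : qscale a (qscale b v) = qscale (a * b) v.
Proof. case: (qpi_surj v) => u ->; by rewrite !qscaleE scalerA. Qed.
Lemma qscale1 : left_id 1 qscale.
Proof. move=> v; case: (qpi_surj v) => u ->; by rewrite !qscaleE scale1r. Qed.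
Lemma qscaleDr : right_distributive qscale +%R.
Proof.
move=> a v w; case: (qpi_surj v) => u ->; case: (qpi_surj w) => u' ->.
by rewrite -qpiD !qscaleE -qpiD scalerDr.
Qed.
Lemma qscaleDl v : {morph qscale^~ v: a b / a + b}.
Proof.
move=> a b; case: (qpi_surj v) => u ->.
by rewrite !qscaleE scalerDl qpiD.
Qed.

HB.instance Definition _ := GRing.Zmodule_isLmodule.Build R (qT S) qscaleA qscale1 qscaleDr qscaleDl.

Lemma qpiZ r u : qpi (r *: u) = r *: qpi u.
Proof. exact: (esym (qscaleE r u)). Qed.
Lemma qpi0 u : qpi u = 0 <-> P u.
Proof. by have := qpiP u 0; rewrite subr0. Qed.

End Ops.
End Quot.

Section QAct.
Variables (R : comPzRingType) (A : lmodType R) (mul : A -> A -> A).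
Variables (V : lmodType R) (S : subm V) (act : A -> V -> V).
Hypothesis hV : is_Aplus_mod mul act.
Hypothesis hS : forall a v, sP S v -> sP S (act a v).

Definition qact (a : A) (q : qT S) : qT S := qpi S (act a (qrep q)).

Lemma qactE a v : qact a (qpi S v) = qpi S (act a v).
Proof.
apply/qpiP; have /qpiP h := qrepK (qpi S v).
have := hS a h; congr (sP S).
by rewrite (actDr hV) (actNr hV).
Qed.

Lemma qact_mod : is_Aplus_mod mul qact.
Proof.
case: hV => aDl aZl aDr aZr aM; split.
- move=> a b q; case: (qpi_surj q) => v ->; by rewrite !qactE aDl qpiD.
- move=> r a q; case: (qpi_surj q) => v ->; by rewrite !qactE aZl qpiZ.
- move=> a q q'; case: (qpi_surj q) => v ->; case: (qpi_surj q') => v' ->.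
  by rewrite -qpiD !qactE aDr qpiD.
- move=> r a q; case: (qpi_surj q) => v ->; by rewrite -qpiZ !qactE aZr qpiZ.
- move=> a b q; case: (qpi_surj q) => v ->; by rewrite !qactE aM.
Qed.
End QAct.

Section DPsec.
Variables (R : comPzRingType) (A : lmodType R) (mul : A -> A -> A).
Variables (gam : nat -> A -> A) (x : A).
Hypothesis hDP : is_DPalg mul gam.
Local Notation g n := (gam n x).

Lemma dmulA a b c : mul a (mul b c) = mul (mul a b) c.
Proof. by case: hDP => [[]]. Qed.
Lemma dmulC a b : mul a b = mul b a.
Proof. by case: hDP => [[]]. Qed.
Lemma dmulDl a b c : mul (a + b) c = mul a c + mul b c.
Proof. by case: hDP => [[]]. Qed.
Lemma dmulZl r a b : mul (r *: a) b = r *: mul a b.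
Proof. by case: hDP => [[]]. Qed.
Lemma dmulDr a b c : mul c (a + b) = mul c a + mul c b.
Proof. by rewrite !(dmulC c) dmulDl. Qed.
Lemma dmulZr r a b : mul b (r *: a) = r *: mul b a.
Proof. by rewrite !(dmulC b) dmulZl. Qed.
Lemma dmul0l a : mul 0 a = 0.
Proof. by have := dmulZl 0 0 a; rewrite !scale0r. Qed.
Lemma dmul0r a : mul a 0 = 0.
Proof. by rewrite dmulC dmul0l. Qed.
Lemma dmul_suml b I (r : seq I) (P : pred I) (F : I -> A) :
  mul (\sum_(i <- r | P i) F i) b = \sum_(i <- r | P i) mul (F i) b.
Proof. exact: (big_morph (mul^~ b) (fun a c => dmulDl a c b) (dmul0l b)). Qed.
Lemma dmul_sumr b I (r : seq I) (P : pred I) (F : I -> A) :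
  mul b (\sum_(i <- r | P i) F i) = \sum_(i <- r | P i) mul b (F i).
Proof. exact: (big_morph (mul b) (fun a c => dmulDr a c b) (dmul0r b)). Qed.
Lemma gam1 : g 1 = x.
Proof. by case: hDP => _ []. Qed.
Lemma gmul i j : (0 < i)%N -> (0 < j)%N -> mul (g i) (g j) = g (i + j)%N *+ 'C(i + j, i).
Proof. by case: hDP => _ [_ [_ _ _ h _]] i0 j0; rewrite h. Qed.

Section Mod.
Variables (N : lmodType R) (act : A -> N -> N).
Hypothesis hN : is_Aplus_mod mul act.

Lemma aactG i y : aact act (gamP gam x i.+1) y = act (g i.+1) y.
Proof. by rewrite /aact /= scale0r addr0. Qed.

Lemma aact_gam i k m :
  aact act (gamP gam x i) (aact act (gamP gam x k) m) =
  aact act (gamP gam x (i + k)) m *+ 'C(i + k, i).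
Proof.
case: i => [|i]; first by rewrite [gamP _ _ 0]/= (aact1 hN) add0n bin0.
rewrite aactG; case: k => [|k]; first by rewrite [gamP _ _ 0]/= (aact1 hN) addn0 binn aactG.
by rewrite aactG -(actM hN) gmul // (actMnl hN) addnS aactG.
Qed.

Definition Sg (Phi : nat -> N) n :=
  \sum_(0 <= i < n) aact act (gamP gam x i) (Phi (n - i)%N).

Lemma inversion (Psi : nat -> N) n : (0 < n)%N ->
  \sum_(0 <= i < n) (-1) ^+ i *: aact act (gamP gam x i) (Sg Psi (n - i)%N) = Psi n.
Proof.
move=> n0.
transitivity (\sum_(0 <= i < n) \sum_(0 <= k < n - i)
   (((-1) ^+ i *: aact act (gamP gam x (i + k)%N) (Psi (n - (i + k))%N)) *+ 'C(i + k, i))).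
  apply: eq_big_nat => i _; rewrite /Sg (aact_sumr hN) scaler_sumr.
  apply: eq_big_nat => k _; rewrite aact_gam scalerMnr subnDA.
  by [].
rewrite (triangle n (fun i m => ((-1) ^+ i *: aact act (gamP gam x m) (Psi (n - m)%N)) *+ 'C(m, i))).
transitivity (\sum_(0 <= m < n) ((m == 0%N)%:R *: aact act (gamP gam x m) (Psi (n - m)%N))).
  apply: eq_big_nat => m _; rewrite -alt_bin scaler_suml.
  by apply: eq_big_nat => i _; rewrite scalerMnl.
rewrite big_ltn // big1_seq ?addr0.
  by rewrite scale1r subn0 (aact1 hN).
move=> m; rewrite mem_index_iota => /and3P [_ m0 _].
by rewrite eqn0Ngt m0 scale0r.
Qed.

Lemma act_Sg (Phi : nat -> N) i j : (0 < i)%N ->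
  act (g i) (Sg Phi j) =
  \sum_(0 <= m < i + j) aact act (gamP gam x m) (Phi (i + j - m)%N) *+ 'C(m, i).
Proof.
case: i => // i _; rewrite -aactG /Sg (aact_sumr hN).
rewrite [in RHS](big_cat_nat _ (n := i.+1)) //= ?leq_addr //.
rewrite [in RHS]big1_seq ?add0r; last first.
  move=> m; rewrite mem_index_iota => /and3P [_ _ lt].
  by rewrite bin_small // mulr0n.
rewrite [in RHS](_ : (i.+1 = 0 + i.+1)%N) // big_addn !add0n addKn.
apply: eq_big_nat => k _; rewrite -[(gam i.+1 x, 0)]/(gamP gam x i.+1) aact_gam addnC.
congr (aact _ _ (Phi _) *+ _); lia.
Qed.

Lemma Tcomb (Phi : nat -> N) i j :
  (forall n m i j, (0 < n)%N -> (0 < i)%N -> (0 < j)%N -> (i + j = m + n)%N ->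
     Phi n *+ 'C(i + j, i) = Phi n *+ ('C(m, i) + 'C(m, j))) ->
  (0 < i)%N -> (0 < j)%N ->
  Sg Phi (i + j) *+ 'C(i + j, i) = act (g i) (Sg Phi j) + act (g j) (Sg Phi i).
Proof.
move=> hPhi i0 j0.
rewrite (act_Sg _ _ i0) (act_Sg _ _ j0) [(j + i)%N]addnC -big_split /= /Sg -sumrMnl.
apply: eq_big_nat => m /andP [_ lt].
rewrite -mulrnDr -!(aactMnr hN); congr aact.
apply: hPhi; lia.
Qed.
End Mod.
End DPsec.

Section Pad.
Variable R : comPzRingType.
Definition pad (c : nat -> R) (N n : nat) := if (n < N)%N then c n else 0.

Lemma sum_pad (V : lmodType R) (v : nat -> V) c N K : (N <= K)%N ->
  \sum_(1 <= n < N) c n *: v n = \sum_(1 <= n < K) pad c N n *: v n.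
Proof.
move=> NK; rewrite (big_nat_widen _ _ _ _ _ NK) big_mkcond /=.
by apply: eq_big_nat => n _; rewrite /pad; case: ifP => //; rewrite scale0r.
Qed.

Lemma delta_sum (V : lmodType R) (v : nat -> V) n : (0 < n)%N ->
  \sum_(1 <= k < n.+1) (k == n)%:R *: v k = v n.
Proof.
move=> n0; rewrite big_nat_recr //= eqxx scale1r big1_seq ?add0r //.
move=> k; rewrite mem_index_iota => /and3P [_ _ lt].
by rewrite (ltn_eqF lt) scale0r.
Qed.
End Pad.

Section DerSec.
Variables (R : comPzRingType) (A : lmodType R) (mul : A -> A -> A).
Variables (gam : nat -> A -> A) (x : A).
Hypothesis hDP : is_DPalg mul gam.
Hypothesis hB : gam_basis gam x.
Local Notation g n := (gam n x).

Lemma uniq_rep N c N' c' :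
  \sum_(1 <= n < N) c n *: g n = \sum_(1 <= n < N') c' n *: g n ->
  forall n, (0 < n)%N -> pad c N n = pad c' N' n.
Proof.
move=> e n n0; set K := maxn N N'.
rewrite (sum_pad _ _ (leq_maxl N N')) (sum_pad _ _ (leq_maxr N N')) in e.
move/eqP: e; rewrite -subr_eq0 -sumrB.
under eq_bigr do rewrite -scalerBl.
move/eqP => e.
case: (ltnP n K) => nK.
  by apply/eqP; rewrite -subr_eq0; apply/eqP; apply: (hB.2 K _ e); rewrite n0.
rewrite /pad !ifF //; apply/negbTE; rewrite -leqNgt.
  exact: leq_trans (leq_maxr _ _) nK.
exact: leq_trans (leq_maxl _ _) nK.
Qed.

Section S.
Variables (N : lmodType R) (T : nat -> N).

Definition repN (a : A) : nat := sval (cid (hB.1 a)).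
Definition repc (a : A) : nat -> R := sval (cid (svalP (cid (hB.1 a)))).

Lemma repP a : a = \sum_(1 <= n < repN a) repc a n *: g n.
Proof. exact: (svalP (cid (svalP (cid (hB.1 a))))). Qed.

Definition sdef (a : A) : N := \sum_(1 <= n < repN a) repc a n *: T n.

Lemma s_rep N0 c : sdef (\sum_(1 <= n < N0) c n *: g n) = \sum_(1 <= n < N0) c n *: T n.
Proof.
set a := \sum_(1 <= n < N0) _.
have e := repP a.
have u := uniq_rep e.
rewrite /sdef (sum_pad _ _ (leq_maxl N0 (repN a))) (sum_pad _ _ (leq_maxr N0 (repN a))).
apply: eq_big_nat => n /andP [n0 _]; by rewrite u.
Qed.

Lemma s_add_rep N1 c1 N2 c2 :
  sdef (\sum_(1 <= n < N1) c1 n *: g n + \sum_(1 <= n < N2) c2 n *: g n) =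
  \sum_(1 <= n < N1) c1 n *: T n + \sum_(1 <= n < N2) c2 n *: T n.
Proof.
rewrite !(sum_pad _ _ (leq_maxl N1 N2)) !(sum_pad _ _ (leq_maxr N1 N2)) -!big_split /=.
under eq_bigr do rewrite -scalerDl.
rewrite s_rep; apply: eq_bigr => n _; by rewrite scalerDl.
Qed.

Lemma s_add a b : sdef (a + b) = sdef a + sdef b.
Proof. by rewrite {1}(repP a) {1}(repP b) s_add_rep. Qed.

Lemma s_scale r a : sdef (r *: a) = r *: sdef a.
Proof.
rewrite {1}(repP a) scaler_sumr.
under eq_bigr do rewrite scalerA.
by rewrite s_rep /sdef scaler_sumr; apply: eq_bigr => n _; rewrite scalerA.
Qed.

Lemma s0 : sdef 0 = 0.
Proof. by have := s_scale 0 0; rewrite !scale0r. Qed.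

Lemma s_sum I (r : seq I) (P : pred I) (F : I -> A) :
  sdef (\sum_(i <- r | P i) F i) = \sum_(i <- r | P i) sdef (F i).
Proof. exact: (big_morph sdef s_add s0). Qed.

Lemma s_muln a k : sdef (a *+ k) = sdef a *+ k.
Proof. by elim: k => [|k IH]; rewrite ?s0 // !mulrS s_add IH. Qed.

Lemma s_g n : (0 < n)%N -> sdef (g n) = T n.
Proof.
move=> n0; rewrite -{1}(delta_sum (fun k => g k) n0) s_rep.
exact: delta_sum.
Qed.

Section Act.
Variable act : A -> N -> N.
Hypothesis hN : is_Aplus_mod mul act.

Lemma act_rep N1 c1 N2 c2 :
  act (\sum_(1 <= i < N1) c1 i *: g i) (\sum_(1 <= j < N2) c2 j *: T j) =
  \sum_(1 <= i < N1) \sum_(1 <= j < N2) (c1 i * c2 j) *: act (g i) (T j).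
Proof.
rewrite (act_suml hN); apply: eq_bigr => i _.
rewrite (actZl hN) (act_sumr hN) scaler_sumr; apply: eq_bigr => j _.
by rewrite (actZr hN) scalerA.
Qed.

Lemma leib_rep N1 c1 N2 c2 :
  (forall i j, (0 < i)%N -> (0 < j)%N ->
    T (i + j)%N *+ 'C(i + j, i) = act (g i) (T j) + act (g j) (T i)) ->
  sdef (mul (\sum_(1 <= i < N1) c1 i *: g i) (\sum_(1 <= j < N2) c2 j *: g j)) =
  act (\sum_(1 <= i < N1) c1 i *: g i) (\sum_(1 <= j < N2) c2 j *: T j) +
  act (\sum_(1 <= j < N2) c2 j *: g j) (\sum_(1 <= i < N1) c1 i *: T i).
Proof.
move=> hT.
rewrite !act_rep (exchange_big_nat _ 1 N2 1 N1) /= -big_split /=.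
rewrite (dmul_suml hDP) s_sum; apply: eq_big_nat => i /andP [i0 _].
rewrite (dmulZl hDP) (dmul_sumr hDP) scaler_sumr s_sum -big_split /=.
apply: eq_big_nat => j /andP [j0 _].
rewrite (dmulZr hDP) scalerA (gmul x hDP) // s_scale s_muln s_g ?addn_gt0 ?i0 //.
by rewrite hT // (mulrC (c2 j)) -scalerDr.
Qed.
End Act.
End S.

Lemma der_exists (N : lmodType R) (act : A -> N -> N) (T : nat -> N) :
  is_Aplus_mod mul act ->
  (forall i j, (0 < i)%N -> (0 < j)%N ->
    T (i + j)%N *+ 'C(i + j, i) = act (g i) (T j) + act (g j) (T i)) ->
  exists s : A -> N, is_der mul act s /\ forall n, (0 < n)%N -> s (g n) = T n.
Proof.
move=> hN hT; exists (sdef T); split; last by move=> n; apply: s_g.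
split; [exact: s_add | exact: s_scale |].
move=> a b.
have := leib_rep hN (repN a) (repc a) (repN b) (repc b) hT.
by rewrite -!repP.
Qed.
End DerSec.

Lemma sum_delta (V : nmodType) (P : pred nat) a b p (F : nat -> V) :
  (a <= p < b)%N -> P p ->
  \sum_(a <= q < b | P q) (if q == p then F q else 0) = F p.
Proof.
move=> hp Pp; rewrite big_mkcond /= (bigD1_seq p) ?mem_index_iota ?iota_uniq //=.
rewrite eqxx Pp big1 ?addr0 // => q /negbTE ->; by case: (P q).
Qed.

Lemma ppow_inj p e q f : prime p -> prime q -> (0 < e)%N -> (0 < f)%N ->
  (q ^ f = p ^ e)%N -> q = p /\ f = e.
Proof.
move=> pp pq e0 f0 h.
have hq : q = p.
  have := congr1 primes h; rewrite !primesX // !primes_prime //; by case.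
split => //; subst q; exact: (expnI (prime_gt1 pp)).
Qed.

Section Phin.
Variables (R : comPzRingType) (M : lmodType R) (phi : nat -> M -> M).
Lemma phin1 m : phin phi 1 m = m.
Proof. by rewrite /phin eqxx. Qed.
Lemma phin_pe p e m : prime p -> (0 < e)%N -> phin phi (p ^ e) m = iter e (phi p) m.
Proof.
move=> pp e0; rewrite /phin.
have -> : (p ^ e == 1)%N = false.
  by apply/negbTE; rewrite neq_ltn (ltn_exp2l 0 e (prime_gt1 pp)) e0 orbT.
by rewrite primesX // primes_prime // pfactorK.
Qed.
Lemma phin_cases k m : k = 1%N \/
  (exists p e, prime p /\ (0 < e)%N /\ phin phi k m = phin phi (p ^ e) m) \/
  phin phi k m = 0.
Proof.
case: (eqVneq k 1%N) => [->|k1]; first by left.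
right; rewrite [phin phi k m]/phin (negbTE k1).
case E: (primes k) => [|p [|q s]]; [by right | left | by right].
have pk : p \in primes k by rewrite E mem_seq1.
have pp : prime p by move: pk; rewrite mem_primes => /andP [].
have e0 : (0 < logn p k)%N by rewrite logn_gt0.
by exists p, (logn p k); split; [|split] => //; rewrite phin_pe.
Qed.
End Phin.

Section MainSec.
Variables (R : comPzRingType) (A : lmodType R)
  (mul : A -> A -> A) (gam : nat -> A -> A) (x : A)
  (M : lmodType R) (act : A -> M -> M) (d : A -> M) (phi : nat -> M -> M).
Hypotheses (hDP : is_DPalg mul gam) (hB : gam_basis gam x)
  (hO : is_OmegaCA mul act d) (hU : is_UA_mod act phi)
  (hD : is_DPder mul gam act phi d).
Local Notation g n := (gam n x).
Local Notation Psi := (fun k => phin phi k (d x)).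

Lemma hM : is_Aplus_mod mul act.
Proof. by case: hO. Qed.

Lemma aactGP (N : lmodType R) (actN : A -> N -> N) i y : (0 < i)%N ->
  aact actN (gamP gam x i) y = actN (g i) y.
Proof. by case: i => // i _; rewrite /aact /= scale0r addr0. Qed.

Lemma part1a n : (0 < n)%N ->
  d (g n) = \sum_(0 <= i < n) aact act (gamP gam x i) (Psi (n - i)%N).
Proof.
move=> n0; case: hD => _ _ _ /(_ n x n0) ->.
rewrite [in RHS]big_ltn //= subn0 (aact1 hM); congr (_ + _).
apply: eq_big_nat => i /andP [i0 _]; by rewrite aactGP.
Qed.

Lemma part1b n : (0 < n)%N ->
  Psi n = \sum_(0 <= i < n) (-1) ^+ i *: aact act (gamP gam x i) (d (g (n - i)%N)).
Proof.
move=> n0 /=; rewrite -{1}(inversion x hDP hM Psi n0).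
apply: eq_big_nat => i /andP [_ lt]; rewrite part1a //; lia.
Qed.

Lemma part2 p e (b : Aplus A) : prime p -> (0 < e)%N ->
  aact act (aplus_natmul b p) (Psi (p ^ e)%N) = 0.
Proof.
move=> pp e0 /=; rewrite phin_pe //.
have h : iter e (phi p) (d x) *+ p = 0.
  case: e e0 => // e _; rewrite iterS; by case: (hU pp).
rewrite /aact /aplus_natmul /= (actMnl hM) -(actMnr hM) h (act0r hM).
by rewrite -scalerMnl scalerMnr h scaler0 addr0.
Qed.

Definition DS (c' : nat -> nat -> Aplus A) (B : nat) : M :=
  \sum_(0 <= p < B | prime p) \sum_(1 <= e < B) aact act (c' p e) (Psi (p ^ e)%N).

Definition Sp (w : M) : Prop :=
  exists (c : Aplus A) (c' : nat -> nat -> Aplus A) (B : nat),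
    w = aact act c (d x) + DS c' B.

Definition cadd (c1 c2 : Aplus A) : Aplus A := (c1.1 + c2.1, c1.2 + c2.2).
Definition cscale (r : R) (c : Aplus A) : Aplus A := (r *: c.1, r * c.2).
Definition cmul (a : A) (c : Aplus A) : Aplus A := (mul a c.1 + c.2 *: a, 0).

Lemma aact00 m : aact act (0, 0) m = 0.
Proof. by rewrite /aact (act0l hM) scale0r addr0. Qed.
Lemma aactD c1 c2 m : aact act (cadd c1 c2) m = aact act c1 m + aact act c2 m.
Proof. by rewrite /aact /cadd /= (actDl hM) scalerDl addrACA. Qed.
Lemma aactZ r c m : r *: aact act c m = aact act (cscale r c) m.
Proof. by rewrite /aact /cscale /= scalerDr (actZl hM) scalerA. Qed.
Lemma act_aact a c m : act a (aact act c m) = aact act (cmul a c) m.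
Proof.
rewrite /aact /cmul /= (actDr hM) (actZr hM) scale0r addr0 (actDl hM) (actM hM).
by rewrite (actZl hM).
Qed.

Definition padc (c' : nat -> nat -> Aplus A) B p e : Aplus A :=
  if (p < B)%N && (e < B)%N then c' p e else (0, 0).

Lemma DS_pad c' B1 B : (B1 <= B)%N -> DS (padc c' B1) B = DS c' B1.
Proof.
move=> le; rewrite /DS [in RHS](big_nat_widen 0 _ _ _ _ le) big_mkcond [in RHS]big_mkcond /=.
apply: eq_big_nat => p _; case: (prime p) => //=.
case: (ltnP p B1) => pB /=.
  rewrite [in RHS](big_nat_widen 1 _ _ _ _ le) [in RHS]big_mkcond /=.
  by apply: eq_big_nat => e _; rewrite /padc pB /=; case: (e < B1)%N; rewrite ?aact00.
by rewrite big1 // => e _; rewrite /padc ltnNge pB /= aact00.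
Qed.

Lemma Sp0 : Sp 0.
Proof. by exists (0, 0), (fun _ _ => (0, 0)), 0%N; rewrite aact00 /DS big_geq // addr0. Qed.

Lemma Sp_add u v : Sp u -> Sp v -> Sp (u + v).
Proof.
move=> [c1 [c1' [B1 ->]]] [c2 [c2' [B2 ->]]].
exists (cadd c1 c2), (fun p e => cadd (padc c1' B1 p e) (padc c2' B2 p e)), (maxn B1 B2).
rewrite aactD -(DS_pad c1' (leq_maxl B1 B2)) -(DS_pad c2' (leq_maxr B1 B2)).
rewrite /DS; set K := maxn B1 B2.
rewrite addrACA; congr (_ + _); rewrite -big_split /=; apply: eq_bigr => p _.
rewrite -big_split /=; apply: eq_bigr => e _; by rewrite aactD.
Qed.

Lemma Sp_scale r u : Sp u -> Sp (r *: u).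
Proof.
move=> [c [c' [B ->]]]; exists (cscale r c), (fun p e => cscale r (c' p e)), B.
rewrite scalerDr aactZ /DS scaler_sumr; congr (_ + _); apply: eq_bigr => p _.
rewrite scaler_sumr; apply: eq_bigr => e _; by rewrite aactZ.
Qed.

Lemma Sp_act a u : Sp u -> Sp (act a u).
Proof.
move=> [c [c' [B ->]]]; exists (cmul a c), (fun p e => cmul a (c' p e)), B.
rewrite (actDr hM) act_aact /DS (act_sumr hM); congr (_ + _); apply: eq_bigr => p _.
rewrite (act_sumr hM); apply: eq_bigr => e _; by rewrite act_aact.
Qed.

Lemma Sp_aact c u : Sp u -> Sp (aact act c u).
Proof. by move=> h; apply: Sp_add; [apply: Sp_act | apply: Sp_scale]. Qed.

Lemma Sp_sum I (r : seq I) (P : pred I) (F : I -> M) :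
  (forall i, P i -> Sp (F i)) -> Sp (\sum_(i <- r | P i) F i).
Proof.
move=> h; elim/big_rec: _ => [|i w Pi hw]; first exact: Sp0.
by apply: Sp_add => //; apply: h.
Qed.

Lemma Sp_dx c : Sp (aact act c (d x)).
Proof.
by exists c, (fun _ _ => (0, 0)), 0%N; rewrite /DS big_geq // addr0.
Qed.

Lemma Sp_pe c p e : prime p -> (0 < e)%N -> Sp (aact act c (Psi (p ^ e)%N)).
Proof.
move=> pp e0.
exists (0, 0), (fun q f => if (q == p) && (f == e) then c else (0, 0)), (maxn p e).+1.
rewrite aact00 add0r /DS.
transitivity (\sum_(0 <= q < (maxn p e).+1 | prime q)
   (if q == p then aact act c (Psi (p ^ e)%N) else 0)).
  by rewrite sum_delta //= ltnS leq_maxl.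
apply: eq_bigr => q _; case: (eqVneq q p) => [->|qp] /=.
  rewrite -(sum_delta (P := xpredT) (a := 1%N) (b := (maxn p e).+1) (p := e) (fun f => aact act c (Psi (p ^ f)%N))) //=.
    apply: eq_bigr => f _; by case: (f == e); rewrite ?aact00.
  by rewrite e0 ltnS leq_maxr.
by rewrite big1 // => f _; rewrite aact00.
Qed.

Lemma Sp_Psi c k : Sp (aact act c (Psi k)).
Proof.
case: (phin_cases phi k (d x)) => [->|[[p [e [pp [e0 ->]]]]|->]].
- by rewrite phin1; exact: Sp_dx.
- exact: Sp_pe.
- by rewrite (aact0r hM); exact: Sp0.
Qed.

Lemma dD a b : d (a + b) = d a + d b.
Proof. by case: hO => _ []. Qed.
Lemma dZ r a : d (r *: a) = r *: d a.
Proof. by case: hO => _ []. Qed.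
Lemma d0 : d 0 = 0.
Proof. by have := dZ 0 0; rewrite !scale0r. Qed.

Lemma Sp_d a : Sp (d a).
Proof.
case: (hB.1 a) => N [c ->].
rewrite (big_morph d dD d0) big_seq_cond; apply: Sp_sum => n /andP [hn _].
rewrite dZ; apply: Sp_scale.
move: hn; rewrite mem_index_iota => /andP [n0 _].
rewrite part1a //; apply: Sp_sum => i _; exact: Sp_Psi.
Qed.


Lemma part3 w : Sp w.
Proof.
pose SS := @Subm R M Sp Sp0 Sp_add Sp_scale.
pose qa := @qact R A M SS act.
have hQ : is_Aplus_mod mul qa := @qact_mod R A mul M SS act hM Sp_act.
case: hO => _ _ /(_ (qT SS) qa (fun _ => 0) hQ) [].
  split => [a b|r a|a b]; rewrite ?addr0 ?scaler0 //.
  by rewrite !(act0r hQ) addr0.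
move=> _ /(_ (qpi SS) (fun _ => 0)) h.
apply/(qpi0 SS); apply: h.
- split; [exact: qpiD | exact: qpiZ |].
  move=> a m; exact: (esym (@qactE R A mul M SS act hM Sp_act a m)).
- split => [m n|r m|a m]; rewrite ?addr0 ?scaler0 //.
  by rewrite (act0r hQ).
- by move=> a; apply/(qpi0 SS); exact: Sp_d.
- by [].
Qed.

Lemma Phi_ok (N : lmodType R) (Phi : nat -> N) :
  (forall n, (1 < n)%N -> Phi n = 0 \/ exists p e, prime p /\ n = (p ^ e)%N /\ Phi n *+ p = 0) ->
  forall n m i j, (0 < n)%N -> (0 < i)%N -> (0 < j)%N -> (i + j = m + n)%N ->
     Phi n *+ 'C(i + j, i) = Phi n *+ ('C(m, i) + 'C(m, j)).
Proof.
move=> h n m i j n0 i0 j0 eij.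
case: (ltngtP n 1) => [n1|n1|n1]; first by exfalso; lia.
  case: (h n n1) => [->|[p [e [pp [ne hp]]]]]; first by rewrite !mul0rn.
  have hc := bin_cong2 pp (etrans eij (congr1 (addn m) ne)) j0.
  rewrite (divn_eq 'C(i + j, i) p) (divn_eq ('C(m, i) + 'C(m, j)) p) hc.
  by rewrite !mulrnDr !(mulnC _ p) !mulrnA hp !mul0rn.
subst n; rewrite (bin_pascal2 (m := m)) //; lia.
Qed.

Lemma f_exists (N : lmodType R) (actN : A -> N -> N) (Phi : nat -> N) :
  is_Aplus_mod mul actN ->
  (forall n, (1 < n)%N -> Phi n = 0 \/ exists p e, prime p /\ n = (p ^ e)%N /\ Phi n *+ p = 0) ->
  exists f : M -> N, is_Aplus_lin act actN f /\
    (forall k, (0 < k)%N -> f (Psi k) = Phi k).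
Proof.
move=> hN hP.
have hT := fun i j => Tcomb x hDP hN (Phi_ok hP) (i := i) (j := j).
have [s [hs hsg]] := der_exists hDP hB hN hT.
case: hO => _ _ /(_ N actN s hN hs) [[f [hf hfd]] _].
exists f; split => // k k0.
case: hf => fD fZ fA.
have f0 : f 0 = 0 by have := fZ 0 0; rewrite !scale0r.
have fS := big_morph f fD f0.
have fa c m : f (aact act c m) = aact actN c (f m) by rewrite /aact fD fZ fA.
rewrite part1b // fS -(inversion x hDP hN Phi k0).
apply: eq_big_nat => i /andP [_ lt].
by rewrite fZ fa hfd hsg //; lia.
Qed.

Local Notation N1 := (A * R^o)%type.
Definition act1 (a : A) (v : N1) : N1 := (mul a v.1 + v.2 *: a, 0).

Lemma N1Z r (u : A) (v : R) : r *: ((u, v) : N1) = (r *: u, r * v).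
Proof. by []. Qed.
Lemma N1D (u u' : A) (v v' : R) : ((u, v) : N1) + (u', v') = (u + u', v + v').
Proof. by []. Qed.

Lemma hN1 : is_Aplus_mod mul act1.
Proof.
split.
- move=> a b [v r]; rewrite /act1 /= N1D; congr (_, _); last by rewrite addr0.
  by rewrite (dmulDl hDP) scalerDr addrACA.
- move=> r a [v s]; rewrite /act1 /= N1Z; congr (_, _); last by rewrite mulr0.
  by rewrite (dmulZl hDP) scalerDr !scalerA mulrC.
- move=> a [v r] [w s]; rewrite /act1 /= !N1D /=; congr (_, _); last by rewrite addr0.
  by rewrite (dmulDr hDP) scalerDl addrACA.
- move=> r a [v s]; rewrite /act1 /= !N1Z /=; congr (_, _); last by rewrite mulr0.
  by rewrite (dmulZr hDP) scalerDr scalerA.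
- move=> a b [v r]; rewrite /act1 /=; congr (_, _).
  by rewrite scale0r addr0 (dmulDr hDP) (dmulZr hDP) (dmulA hDP).
Qed.

Lemma aact_one (c : Aplus A) : aact act1 c ((0, 1) : N1) = c.
Proof.
case: c => a r; rewrite /aact /act1 /= (dmul0r hDP) add0r scale1r.
by rewrite N1Z N1D scaler0 addr0 add0r mulr1.
Qed.

Lemma N1_mulrn (b : N1) k : b *+ k = (b.1 *+ k, b.2 *+ k).
Proof.
elim: k => [|k IH]; first by case: b.
by rewrite !mulrS IH.
Qed.

Lemma DS_f (N : lmodType R) (actN : A -> N -> N) (f : M -> N) (Phi : nat -> N) c' B :
  is_Aplus_lin act actN f -> (forall k, (0 < k)%N -> f (Psi k) = Phi k) ->
  f (DS c' B) = \sum_(0 <= p < B | prime p) \sum_(1 <= e < B) aact actN (c' p e) (Phi (p ^ e)%N).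
Proof.
case=> fD fZ fA hf.
have f0 : f 0 = 0 by have := fZ 0 0; rewrite !scale0r.
have fa c m : f (aact act c m) = aact actN c (f m) by rewrite /aact fD fZ fA.
rewrite /DS (big_morph f fD f0); apply: eq_bigr => p pp.
rewrite (big_morph f fD f0); apply: eq_bigr => e _.
by rewrite fa hf // expn_gt0 prime_gt0.
Qed.


Lemma f_aact (N : lmodType R) (actN : A -> N -> N) (f : M -> N) c m :
  is_Aplus_lin act actN f -> f (aact act c m) = aact actN c (f m).
Proof. by case=> fD fZ fA; rewrite /aact fD fZ fA. Qed.

Lemma f_zero (N : lmodType R) (actN : A -> N -> N) (f : M -> N) :
  is_Aplus_lin act actN f -> f 0 = 0.
Proof. by case=> fD fZ fA; have := fZ 0 0; rewrite !scale0r. Qed.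

Lemma ppow_gt1 p e : prime p -> (0 < e)%N -> (1 < p ^ e)%N.
Proof. by move=> pp e0; rewrite (ltn_exp2l 0 e (prime_gt1 pp)). Qed.

Lemma part4a c c' B : aact act c (d x) + DS c' B = 0 -> c = (0, 0).
Proof.
pose Phic := fun n => if n == 1%N then ((0, 1) : N1) else 0.
have hP : forall n, (1 < n)%N -> Phic n = 0 \/
    exists p e, prime p /\ n = (p ^ e)%N /\ Phic n *+ p = 0.
  by move=> n n1; left; rewrite /Phic gtn_eqF.
have [f [hf hfP]] := f_exists hN1 hP.
move=> /(congr1 f); rewrite (f_zero hf).
have [fD _ _] := hf.
rewrite fD (DS_f c' B hf hfP) (f_aact _ _ hf) -[d x](phin1 phi) hfP // /Phic eqxx aact_one.
rewrite big1 ?addr0 // => p pp; rewrite big1_seq // => e.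
rewrite mem_index_iota => /and3P [_ e0 _].
by rewrite gtn_eqF ?ppow_gt1 // (aact0r hN1).
Qed.

Section Part4b.
Variables (p e : nat).
Definition Sp2 (v : N1) : Prop := exists b : N1, v = b *+ p.
Lemma Sp2_0 : Sp2 0.
Proof. by exists 0; rewrite mul0rn. Qed.
Lemma Sp2_add u v : Sp2 u -> Sp2 v -> Sp2 (u + v).
Proof. by move=> [b ->] [b' ->]; exists (b + b'); rewrite mulrnDl. Qed.
Lemma Sp2_scale r u : Sp2 u -> Sp2 (r *: u).
Proof. by move=> [b ->]; exists (r *: b); rewrite scalerMnr. Qed.
Lemma Sp2_act a u : Sp2 u -> Sp2 (act1 a u).
Proof. by move=> [b ->]; exists (act1 a b); rewrite (actMnr hN1). Qed.

Lemma part4b c c' B : prime p -> (0 < e)%N -> (p < B)%N -> (e < B)%N ->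
  aact act c (d x) + DS c' B = 0 -> exists b : Aplus A, c' p e = aplus_natmul b p.
Proof.
move=> pp e0 pB eB.
pose SS2 := @Subm R N1 Sp2 Sp2_0 Sp2_add Sp2_scale.
pose act2 := @qact R A N1 SS2 act1.
have hN2 : is_Aplus_mod mul act2 := @qact_mod R A mul N1 SS2 act1 hN1 Sp2_act.
have qE a v : act2 a (qpi SS2 v) = qpi SS2 (act1 a v) := @qactE R A mul N1 SS2 act1 hN1 Sp2_act a v.
have qaE c0 v : aact act2 c0 (qpi SS2 v) = qpi SS2 (aact act1 c0 v).
  by rewrite /aact qE qpiD qpiZ.
have q0 : qpi SS2 0 = 0 by apply/(qpi0 SS2); exact: Sp2_0.
have qMn v k : qpi SS2 (v *+ k) = qpi SS2 v *+ k.
  by elim: k => [|k IH]; rewrite ?q0 // !mulrS qpiD IH.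
pose Phi2 := fun n => if n == (p ^ e)%N then qpi SS2 ((0, 1) : N1) else 0.
have hP : forall n, (1 < n)%N -> Phi2 n = 0 \/
    exists p e, prime p /\ n = (p ^ e)%N /\ Phi2 n *+ p = 0.
  move=> n n1; rewrite /Phi2; case: eqP => [->|_]; last by left.
  right; exists p, e; split => //; split => //.
  by rewrite -qMn; apply/(qpi0 SS2); exists (0, 1).
have [f [hf hfP]] := f_exists hN2 hP.
move=> /(congr1 f); rewrite (f_zero hf).
have [fD _ _] := hf.
rewrite fD (DS_f c' B hf hfP) (f_aact _ _ hf) -[d x](phin1 phi) hfP //.
rewrite /Phi2 eq_sym (gtn_eqF (ppow_gt1 pp e0)) (aact0r hN2) add0r.
have -> : \sum_(0 <= q < B | prime q) \sum_(1 <= f < B)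
     aact act2 (c' q f) (if (q ^ f == p ^ e)%N then qpi SS2 ((0, 1) : N1) else 0) =
  \sum_(0 <= q < B | prime q) (if q == p then aact act2 (c' p e) (qpi SS2 ((0, 1) : N1)) else 0).
  apply: eq_bigr => q pq.
  case: (eqVneq q p) => [->|qp].
    rewrite -(sum_delta (P := xpredT) (a := 1%N) (b := B) (p := e)
      (fun f => aact act2 (c' p f) (qpi SS2 ((0, 1) : N1)))) //=; last by rewrite e0.
    rewrite big_seq [in RHS]big_seq; apply: eq_bigr => j.
    rewrite mem_index_iota => /andP [f0 _].
    case: (eqVneq j e) => [->|fe]; first by rewrite eqxx.
    case: eqP => [h|_]; last by rewrite (aact0r hN2).
    by have [_ fe'] := ppow_inj pp pp e0 f0 h; rewrite fe' eqxx in fe.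
  rewrite big1_seq // => j; rewrite mem_index_iota => /and3P [_ f0 _].
  case: eqP => [h|_]; last by rewrite (aact0r hN2).
  by have [qp' _] := ppow_inj pp pq e0 f0 h; rewrite qp' eqxx in qp.
rewrite sum_delta //=.
rewrite qaE => /(qpi0 SS2); rewrite aact_one => -[b hb].
by exists b; rewrite hb N1_mulrn.
Qed.
End Part4b.
End MainSec.

Theorem mainTheorem8 (R : comPzRingType) (A : lmodType R)
  (mul : A -> A -> A) (gam : nat -> A -> A) (x : A)
  (M : lmodType R) (act : A -> M -> M) (d : A -> M) (phi : nat -> M -> M) :
  is_DPalg mul gam -> gam_basis gam x ->
  is_OmegaCA mul act d ->
  is_UA_mod act phi -> is_DPder mul gam act phi d ->
  (forall n, (0 < n)%N ->
     d (gam n x) = \sum_(0 <= i < n) aact act (gamP gam x i) (phin phi (n - i)%N (d x))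
     /\ phin phi n (d x)
        = \sum_(0 <= i < n) ((-1) ^+ i) *: aact act (gamP gam x i) (d (gam (n - i)%N x)))
  /\ (forall (p e : nat) (b : Aplus A), prime p -> (0 < e)%N ->
        aact act (aplus_natmul b p) (phin phi (p ^ e)%N (d x)) = 0)
  /\ (forall w : M, exists (c : Aplus A) (c' : nat -> nat -> Aplus A) (B : nat),
        w = aact act c (d x)
            + \sum_(0 <= p < B | prime p) \sum_(1 <= e < B)
                 aact act (c' p e) (phin phi (p ^ e)%N (d x)))
  /\ (forall (c : Aplus A) (c' : nat -> nat -> Aplus A) (B : nat),
        aact act c (d x)
          + \sum_(0 <= p < B | prime p) \sum_(1 <= e < B)
               aact act (c' p e) (phin phi (p ^ e)%N (d x)) = 0 ->
        c = (0, 0) /\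
        forall p e : nat, prime p -> (0 < e)%N -> (p < B)%N -> (e < B)%N ->
          exists b : Aplus A, c' p e = aplus_natmul b p).
Proof.
move=> hDP hB hO hU hD.
split; [|split; [|split]].
- move=> n n0; split.
    exact: (@part1a R A mul gam x M act d phi hO hD n n0).
  exact: (@part1b R A mul gam x M act d phi hDP hO hD n n0).
- move=> p e b pp e0; exact: (@part2 R A mul x M act d phi hO hU p e b pp e0).
- move=> w; exact: (@part3 R A mul gam x M act d phi hB hO hD w).
- move=> c c' B h; split.
    exact: (@part4a R A mul gam x M act d phi hDP hB hO hD c c' B h).
  move=> p e pp e0 pB eB.
  exact: (@part4b R A mul gam x M act d phi hDP hB hO hD p e c c' B pp e0 pB eB h).
Qed.
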